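(* Let $n \in \mathbb{N}$ be even. For every $\epsilon > 0$ sufficiently small, there exists a set $X$ of $n$ points in $\mathbb{R}^2$ (an instance of the Euclidean TSP in the plane) such that the approximation ratio of X-opt on $X$ is at least $\frac{n}{2}(1-\epsilon)$. That is, there is a noncrossing tour $T$ through $X$ with $\ell(T) \geq \frac{n}{2}(1-\epsilon)\cdot \ell(T^* )$, where $T^*$ is a shortest tour through $X$. In particular, the approximation ratio can be brought arbitrarily close to $\frac{n}{2}$.
   Context: Euclidean TSP in the plane: given a finite set $X \subset \mathbb{R}^2$, a tour is a Hamiltonian cycle on $X$; the length of an edge $\{x,y\}$ is the Euclidean distance $d(x,y)$, and the length $\ell(T)$ of a tour is the sum of its edge lengths. For an edge $e=\{x,y\}$, $L(e)$ denotes the closed line segment from $x$ to $y$. A set of edges is noncrossing if no two of its edges have intersecting line segments (other than at a shared endpoint). X-opt is the local search heuristic that repeatedly replaces two edges of the tour whose line segments intersect by two other edges so as to obtain a tour again; its local optima are exactly the noncrossing tours. The approximation ratio of X-opt on an instance is the ratio of the length of the longest noncrossing tour to the length of an optimal (shortest) tour. *)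

(* Defs.v *)
From mathcomp Require Import all_boot all_order all_algebra all_fingroup.
From mathcomp Require Import reals.
Set Implicit Arguments. Unset Strict Implicit. Unset Printing Implicit Defensive.
Import Order.TTheory GRing.Theory Num.Theory.
Local Open Scope ring_scope.

Section TSP.
Variable R : realType.
Definition pt := (R * R)%type.

Definition dist (x y : pt) : R := Num.sqrt ((x.1 - y.1) ^+ 2 + (x.2 - y.2) ^+ 2).

Definition segment (x y : pt) : pt -> Prop :=
  fun z => exists t : R, 0 <= t /\ t <= 1 /\
     z = ((1 - t) * x.1 + t * y.1, (1 - t) * x.2 + t * y.2).

Variable n : nat.
Variable X : 'I_n -> pt.

(* A tour is a Hamiltonian cycle on X, given by a cyclic visiting order
   s 0, s 1, ..., s (n-1), s 0 ; its i-th edge is {s i, s (i+1 mod n)}. *)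
Definition edge (s : 'S_n) (i : 'I_n) : {set 'I_n} := [set s i; s (ordS i)].

Definition tour_length (s : 'S_n) : R :=
  \sum_(i < n) dist (X (s i)) (X (s (ordS i))).

Definition noncrossing (s : 'S_n) : Prop :=
  forall i j : 'I_n, edge s i != edge s j ->
    forall z : pt,
      segment (X (s i)) (X (s (ordS i))) z ->
      segment (X (s j)) (X (s (ordS j))) z ->
      exists2 a : 'I_n, a \in edge s i :&: edge s j & z = X a.

Definition optimal_tour (s : 'S_n) : Prop :=
  forall s' : 'S_n, tour_length s <= tour_length s'.
End TSP.

(* Main.v *)
Require Import Defs.
From mathcomp Require Import all_boot all_order all_algebra all_fingroup.
From mathcomp Require Import reals.
From mathcomp Require Import ring lra zify.
Import Order.TTheory GRing.Theory Num.Theory.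
Local Open Scope ring_scope.

Lemma ex_min (R : realType) (T : finType) (f : T -> R) (t0 : T) :
  exists s, forall s', f s <= f s'.
Proof.
case: (@real_arg_minP R T t0 xpredT f) => //; first by move=> i _; apply: num_real.
move=> s _ H.
by exists s => sp; apply: H.
Qed.

Lemma dist_ge (R : realType) (P Q : pt R) : `|P.1 - Q.1| <= dist P Q.
Proof.
rewrite /dist -sqrtr_sqr ler_wsqrtr // lerDl sqr_ge0 //.
Qed.

Lemma dist_le (R : realType) (P Q : pt R) : dist P Q <= `|P.1 - Q.1| + `|P.2 - Q.2|.
Proof.
rewrite /dist; set a := P.1 - Q.1; set b := P.2 - Q.2.
rewrite -(ger0_norm (_ : 0 <= `|a| + `|b|)) ?addr_ge0 //.
rewrite -sqrtr_sqr ler_wsqrtr //.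
have ha := real_normK (num_real a); have hb := real_normK (num_real b).
have := normr_ge0 a; have := normr_ge0 b.
rewrite -ha -hb; nra.
Qed.

Section Geo.
Variable R : realType.
Implicit Types (a b c w D d : R) (z : pt R).

Lemma seg_sym (P Q z : pt R) : segment P Q z -> segment Q P z.
Proof.
case=> t [t0 [t1 ->]]; exists (1 - t); split; first lra; split; first lra.
congr pair => /=; ring.
Qed.

Lemma seg_coord (P Q z : pt R) : segment P Q z -> exists t, 0 <= t /\ t <= 1 /\
  z.1 = (1 - t) * P.1 + t * Q.1 /\ z.2 = (1 - t) * P.2 + t * Q.2.
Proof. by case=> t [t0 [t1 ->]]; exists t. Qed.

Lemma vert a b a' b' w z : 0 < w -> a <= a' -> b <= b' -> (a < a' \/ b < b') ->
  segment (0, a) (w, b) z -> segment (0, a') (w, b') z ->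
  (a = a' /\ z = (0, a)) \/ (b = b' /\ z = (w, b)).
Proof.
move=> w0 aa bb hs [t [t0 [t1 ->]]] [s [s0 [s1 [e1 e2]]]].
have ts : t = s.
  apply: (mulIf (lt0r_neq0 w0)); move: e1; rewrite /= !mulr0 !add0r => ->.
  done.
subst t; case: hs => h.
- have s1' : s = 1 by nra.
  subst s; right; split; first by move: e2 => /=; lra.
  congr pair => /=; ring.
- have s1' : s = 0 by nra.
  subst s; left; split; first by move: e2 => /=; lra.
  congr pair => /=; ring.
Qed.

Lemma wedge_up a b c tp d D z : 0 < D -> 0 < d -> d < 1 -> tp = c *+ 2 -> a <= tp ->
  b < c + d * c ->
  segment (0, a) ((1 - d) * D, b) z -> segment (0, tp) (D, c) z ->
  a = tp /\ z = (0, a).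
Proof.
move=> D0 d0 d1 -> ha hb [s [s0 [s1 ->]]] [t [t0 [t1 [e1 e2]]]].
move: e1 e2 => /=; rewrite !mulr0 !add0r => e1 e2.
have ts : t = s * (1 - d).
  apply: (mulIf (lt0r_neq0 D0)); by rewrite -e1 mulrA.
subst t.
have s0' : s = 0.
  case: (ltrgt0P s) => // sp.
  - exfalso; rewrite mulr2n in ha e2; nra.
  - lra.
subst s; split; first by move: e2; rewrite mulr2n; lra.
congr pair => /=; ring.
Qed.

Lemma wedge_low a b c d D z : 0 < D -> 0 < d -> d < 1 -> 0 <= a ->
  c - d * c < b ->
  segment (0, a) ((1 - d) * D, b) z -> segment (D, c) (0, 0) z ->
  a = 0 /\ z = (0, a).
Proof.
move=> D0 d0 d1 ha hb [s [s0 [s1 ->]]] [t [t0 [t1 [e1 e2]]]].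
move: e1 e2 => /=; rewrite !mulr0 !add0r !addr0 => e1 e2.
have ts : 1 - t = s * (1 - d).
  apply: (mulIf (lt0r_neq0 D0)); by rewrite -e1 mulrA.
have s0' : s = 0.
  case: (ltrgt0P s) => // sp.
  - exfalso; nra.
  - lra.
subst s; split; first by move: e2; nra.
congr pair => /=; ring.
Qed.

Lemma outer2 c tp D z : 0 < D -> 0 < c -> tp = c *+ 2 ->
  segment (0, tp) (D, c) z -> segment (D, c) (0, 0) z -> z = (D, c).
Proof.
move=> D0 c0 -> [s [s0 [s1 ->]]] [t [t0 [t1 [e1 e2]]]].
move: e1 e2 => /=; rewrite !mulr0 !add0r !addr0 => e1 e2.
have ts : 1 - t = s.
  apply: (mulIf (lt0r_neq0 D0)); by rewrite -e1.
subst s; rewrite mulr2n in e2.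
have t0' : t = 0 by nra.
subst t; congr pair => /=; ring.
Qed.
End Geo.

Section Constr.
Variable R : realType.
Variables (n : nat) (D d : R).
Hypotheses (n4 : (4 <= n)%N) (ne : ~~ odd n) (D0 : 0 < D) (d0 : 0 < d) (d1 : d < 1).

Definition cc : R := (n.-2)%:R / 2.
Definition bR (m : nat) : R := cc + d * (m%:R - cc).
Definition Xn (m : nat) : pt R :=
  if ~~ odd m then (0, m%:R) else if m == n.-1 then (D, cc) else ((1 - d) * D, bR m).

Lemma Xn_even m : ~~ odd m -> Xn m = (0, m%:R).
Proof. by rewrite /Xn => ->. Qed.

Lemma odd_last : odd n.-1.
Proof. by move: ne n4; case: n => // k; rewrite /= negbK. Qed.

Lemma Xn_last : Xn n.-1 = (D, cc).
Proof. by rewrite /Xn odd_last eqxx. Qed.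

Lemma Xn_odd m : odd m -> m != n.-1 -> Xn m = ((1 - d) * D, bR m).
Proof. by rewrite /Xn => -> /negbTE ->. Qed.

Lemma cc2 : (n.-2)%:R = cc *+ 2 :> R.
Proof. rewrite /cc mulr2n; lra. Qed.

Lemma bR_le m m' : (m <= m')%N -> bR m <= bR m'.
Proof. move=> h; rewrite /bR lerD2l ler_pM2l // lerD2r ler_nat //. Qed.

Lemma bR_lt m m' : (m < m')%N -> bR m < bR m'.
Proof. move=> h; rewrite /bR ltrD2l ltr_pM2l // ltrD2r ltr_nat //. Qed.

Lemma bR_inj m m' : bR m = bR m' -> m = m'.
Proof.
move=> e; case: (ltngtP m m') => // h; [have := bR_lt _ _ h | have := bR_lt _ _ h];
  by rewrite e ltxx.
Qed.

Definition le_ i := (i + odd i)%N.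
Definition ri_ i := (i + ~~ odd i)%N.

Lemma zig i z : (i.+3 <= n)%N -> segment (Xn i) (Xn (i.+1 %% n)) z ->
  segment (0, (le_ i)%:R) ((1 - d) * D, bR (ri_ i)) z.
Proof.
move=> hi; rewrite modn_small; last by lia.
rewrite /le_ /ri_; case hodd: (odd i) => /=.
- rewrite addn1 addn0 (Xn_even i.+1) /= ?hodd // (Xn_odd i) ?hodd //;
    last by apply/eqP; lia.
  exact: seg_sym.
- rewrite addn1 addn0 (Xn_even i) ?hodd // (Xn_odd i.+1) /= ?hodd //.
  apply/eqP; lia.
Qed.

Lemma le_even i : ~~ odd (le_ i).
Proof. by rewrite /le_ oddD; case: (odd i). Qed.
Lemma ri_odd i : odd (ri_ i).
Proof. by rewrite /ri_ oddD; case: (odd i). Qed.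
Lemma le_bnd i : (le_ i <= i.+1 /\ i <= le_ i)%N.
Proof. by rewrite /le_; case: (odd i) => /=; lia. Qed.
Lemma ri_bnd i : (ri_ i <= i.+1 /\ i <= ri_ i)%N.
Proof. by rewrite /ri_; case: (odd i) => /=; lia. Qed.
Lemma le_cases i : le_ i = i \/ le_ i = i.+1.
Proof. by rewrite /le_; case: (odd i) => /=; [right; lia | left; lia]. Qed.
Lemma ri_cases i : ri_ i = i \/ ri_ i = i.+1.
Proof. by rewrite /ri_; case: (odd i) => /=; [left; lia | right; lia]. Qed.

Definition segn i z := segment (Xn i) (Xn (i.+1 %% n)) z.
Definition concl i j z := exists a, (a < n)%N /\ (a = i \/ a = (i.+1 %% n)%N) /\
   (a = j \/ a = (j.+1 %% n)%N) /\ z = Xn a.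

Lemma w0 : 0 < (1 - d) * D.
Proof. by apply: mulr_gt0 => //; rewrite subr_gt0. Qed.

Lemma caseA i j z : (i < j)%N -> (j.+3 <= n)%N -> segn i z -> segn j z -> concl i j z.
Proof.
move=> ij hj hi' hj'.
have /zig hi2 := hi'; have /zig hj2 := hj'.
have hi3 : (i.+3 <= n)%N by lia.
move: (hi2 hi3) (hj2 hj) => {hi2 hj2} si sj.
have lel : (le_ i <= le_ j)%N.
  by rewrite /le_; case: (odd i); case: (odd j) => /=; lia.
have ler : (ri_ i <= ri_ j)%N.
  by rewrite /ri_; case: (odd i); case: (odd j) => /=; lia.
have strict : (le_ i < le_ j)%N \/ (ri_ i < ri_ j)%N.
  by rewrite /le_ /ri_; case: (odd i); case: (odd j) => /=; first [by left; lia | by right; lia].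
have H : (le_ i)%:R < (le_ j)%:R :> R \/ bR (ri_ i) < bR (ri_ j).
  by case: strict => h; [left; rewrite ltr_nat | right; apply: bR_lt].
have lel' : (le_ i)%:R <= (le_ j)%:R :> R by rewrite ler_nat.
have := @vert R _ _ _ _ _ _ w0 lel' (bR_le _ _ ler) H si sj.
case=> [[e ->] | [e ->]].
- move/eqP: e; rewrite eqr_nat => /eqP e.
  have [b1 b2] := le_bnd i; have [b3 b4] := le_bnd j.
  exists (le_ i); split; first by lia.
  rewrite !modn_small; try lia.
  split; first exact: le_cases.
  split; first by rewrite e; exact: le_cases.
  by rewrite Xn_even // le_even.
- move/bR_inj: e => e.
  have [b1 b2] := ri_bnd i; have [b3 b4] := ri_bnd j.
  exists (ri_ i); split; first by lia.
  rewrite !modn_small; try lia.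
  split; first exact: ri_cases.
  split; first by rewrite e; exact: ri_cases.
  rewrite Xn_odd ?ri_odd //; apply/eqP; lia.
Qed.

Lemma ri_lt i : (i.+3 <= n)%N -> (ri_ i < n.-2)%N.
Proof.
move=> hi; have hn := odd_double_half n; rewrite (negbTE ne) in hn.
have hi2 := odd_double_half i; rewrite /ri_.
case: (odd i) hi2 => /= hi2; rewrite -!muln2 in hn hi2; lia.
Qed.

Lemma ri_pos i : (0 < ri_ i)%N.
Proof. by rewrite /ri_; case hodd: (odd i) => /=; [case: i hodd | lia]. Qed.

Lemma bR_top : bR n.-2 = cc + d * cc.
Proof. rewrite /bR cc2 mulr2n; congr (_ + _); congr (_ * _); ring. Qed.

Lemma bR_bot : bR 0 = cc - d * cc.
Proof. rewrite /bR /=; ring. Qed.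

Lemma even_n2 : ~~ odd n.-2.
Proof. by move: ne n4; case: n => [|[|k]] //=; rewrite negbK. Qed.

Lemma caseB i z : (i.+3 <= n)%N -> segn i z -> segn n.-2 z -> concl i n.-2 z.
Proof.
move=> hi /(zig _ _ hi) si; rewrite /segn modn_small; last by lia.
have -> : (n.-2).+1 = n.-1 by lia.
rewrite Xn_last Xn_even ?even_n2 // => sj.
have [b1 b2] := le_bnd i.
have hb : bR (ri_ i) < cc + d * cc by rewrite -bR_top; apply: bR_lt; apply: ri_lt.
have ha : (le_ i)%:R <= (n.-2)%:R :> R by rewrite ler_nat; lia.
have [e ->] := @wedge_up R _ _ _ _ _ _ _ D0 d0 d1 cc2 ha hb si sj.
move/eqP: e; rewrite eqr_nat => /eqP e.
exists (n.-2); split; first by lia.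
rewrite !modn_small; try lia.
split; first by rewrite -e; exact: le_cases.
split; first by left.
by rewrite -e Xn_even // le_even.
Qed.

Lemma caseC i z : (i.+3 <= n)%N -> segn i z -> segn n.-1 z -> concl i n.-1 z.
Proof.
move=> hi /(zig _ _ hi) si; rewrite /segn.
have -> : (n.-1).+1 = n by lia.
rewrite modnn Xn_last Xn_even //= => sj.
have [b1 b2] := le_bnd i.
have hb : cc - d * cc < bR (ri_ i) by rewrite -bR_bot; apply: bR_lt; apply: ri_pos.
have ha : 0 <= (le_ i)%:R :> R by rewrite ler0n.
have [e ->] := @wedge_low R _ _ _ _ _ _ D0 d0 d1 ha hb si sj.
move/eqP: e; rewrite pnatr_eq0 => /eqP e.
exists 0%N; split; first by lia.
rewrite (@modn_small i.+1 n); last by lia.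
have -> : (n.-1).+1 = n by lia.
rewrite modnn.
split; first by rewrite -e; exact: le_cases.
split; first by right.
by rewrite e Xn_even.
Qed.

Lemma caseD z : segn n.-2 z -> segn n.-1 z -> concl n.-2 n.-1 z.
Proof.
rewrite /segn modn_small; last by lia.
have -> : (n.-2).+1 = n.-1 by lia.
have -> : (n.-1).+1 = n by lia.
rewrite modnn Xn_last !Xn_even ?even_n2 //= => si sj.
have c0 : 0 < cc by rewrite /cc; apply: divr_gt0 => //; rewrite ltr0n; lia.
have ez := @outer2 R _ _ _ _ D0 c0 cc2 si sj.
exists n.-1; split; first by lia.
split; first by right; rewrite modn_small //; lia.
split; first by left.
by rewrite ez Xn_last.
Qed.

Lemma noncross_nat i j z : (i < j)%N -> (j < n)%N -> segn i z -> segn j z -> concl i j z.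
Proof.
move=> ij jn si sj.
case: (leqP j.+3 n) => hj; first exact: caseA.
case: (ltngtP j n.-2) => hj2; first by lia.
- have ej : j = n.-1 by lia.
  rewrite ej in sj *.
  case: (leqP i.+3 n) => hi; first exact: caseC.
  have ei : i = n.-2 by lia.
  rewrite ei in si *; exact: caseD.
- rewrite hj2 in sj *; apply: caseB => //; lia.
Qed.

Lemma concl_sym i j z : concl i j z -> concl j i z.
Proof. by case=> a [h1 [h2 [h3 h4]]]; exists a. Qed.

Lemma noncross : noncrossing (fun m : 'I_n => Xn m) 1%g.
Proof.
move=> i j hne z; rewrite !perm1 => si sj.
have [a [an [ha1 [ha2 ->]]]] : concl i j z.
  case: (ltngtP i j) => h.
  - by apply: noncross_nat.
  - by apply: concl_sym; apply: noncross_nat.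
  - by move: hne; rewrite (val_inj h) eqxx.
exists (Ordinal an) => //.
rewrite !inE !perm1 -!val_eqE /=.
by case: ha1 => [e1|e1]; case: ha2 => [e2|e2]; rewrite -{1}e1 -{1}e2 !eqxx ?orbT.
Qed.

Lemma Xinj : injective (fun m : 'I_n => Xn m).
Proof.
move=> [a ha] [b hb] /= e; apply: val_inj => /=.
have dD : 0 < d * D by apply: mulr_gt0.
case oa: (odd a); case ob: (odd b); move: e; rewrite /Xn oa ob /=.
- case: eqP => ea; case: eqP => eb; try by rewrite ea eb.
  + move=> /(congr1 fst) /= e1; exfalso; move: e1; rewrite mulrBl mul1r; lra.
  + move=> /(congr1 fst) /= e1; exfalso; move: e1; rewrite mulrBl mul1r; lra.
  + by move=> [= /bR_inj].
- have := w0; case: eqP => _ hw /(congr1 fst) /= e1; exfalso; lra.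
- have := w0; case: eqP => _ hw /(congr1 fst) /= e1; exfalso; lra.
- by move=> [= /eqP]; rewrite eqr_nat => /eqP.
Qed.

Lemma cc_bnd : 0 <= cc <= n%:R.
Proof.
rewrite /cc; have h1 : (n.-2 <= n)%N by lia.
have : (n.-2)%:R <= n%:R :> R by rewrite ler_nat.
have : 0 <= (n.-2)%:R :> R by rewrite ler0n.
move=> ? ?; apply/andP; split; lra.
Qed.

Lemma wle : (1 - d) * D <= D.
Proof. rewrite mulrBl mul1r lerBlDr lerDl; apply: mulr_ge0; exact: ltW. Qed.

Lemma xy_bnd m : (m < n)%N ->
  [/\ 0 <= (Xn m).2 <= n%:R, (odd m -> (1 - d) * D <= (Xn m).1 <= D) &
      (~~ odd m -> (Xn m).1 = 0)].
Proof.
move=> mn; have /andP [c0 c1] := cc_bnd.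
have m0 : 0 <= m%:R :> R by rewrite ler0n.
have m1 : m%:R <= n%:R :> R by rewrite ler_nat ltnW.
rewrite /Xn; case om: (odd m) => /=.
- case: eqP => _ /=.
  + split => //; [apply/andP; split => // | move=> _; apply/andP; split => //; exact: wle].
  + split => //; last by move=> _; apply/andP; split => //; exact: wle.
    have hd : 0 <= 1 - d by rewrite subr_ge0 ltW.
    have p1 := mulr_ge0 hd c0; have p2 := mulr_ge0 (ltW d0) m0.
    have p3 : (1 - d) * cc <= (1 - d) * n%:R by apply: ler_wpM2l.
    have p4 : d * m%:R <= d * n%:R by apply: ler_wpM2l => //; exact: ltW.
    have e : bR m = (1 - d) * cc + d * m%:R by rewrite /bR; ring.
    rewrite e; apply/andP; split; first lra.
    have : (1 - d) * n%:R + d * n%:R = n%:R :> R by ring.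
    lra.
- split => //; apply/andP; split => //.
Qed.

Lemma dist_diff m m' : (m < n)%N -> (m' < n)%N -> odd m != odd m' ->
  (1 - d) * D <= dist (Xn m) (Xn m').
Proof.
move=> mn mn' hp; apply: le_trans _ (dist_ge _ _ _).
have [_ o1 e1] := xy_bnd _ mn; have [_ o2 e2] := xy_bnd _ mn'.
have hw : 0 <= (1 - d) * D by apply: mulr_ge0; [rewrite subr_ge0 ltW | exact: ltW].
case om: (odd m) hp; case om': (odd m') => // _.
- have /andP [h1 h2] := o1 om; rewrite (e2 (negbT om')) subr0 ger0_norm //.
  exact: le_trans hw h1.
- have /andP [h1 h2] := o2 om'; rewrite (e1 (negbT om)) sub0r normrN ger0_norm //.
  exact: le_trans hw h1.
Qed.

Lemma dist_same m m' : (m < n)%N -> (m' < n)%N -> odd m = odd m' ->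
  dist (Xn m) (Xn m') <= n%:R + d * D.
Proof.
move=> mn mn' hp; apply: le_trans (dist_le _ _ _) _.
have [/andP [y1 y2] o1 e1] := xy_bnd _ mn; have [/andP [y3 y4] o2 e2] := xy_bnd _ mn'.
have hy : `|(Xn m).2 - (Xn m').2| <= n%:R by rewrite ler_norml; apply/andP; split; lra.
rewrite addrC lerD //.
case om: (odd m) hp => hp.
- have /andP [h1 h2] := o1 om; have /andP [h3 h4] := o2 (esym hp).
  rewrite ler_norml; apply/andP; split; nra.
- rewrite e1 ?om // e2 -?hp ?om // subrr normr0; apply: mulr_ge0; exact: ltW.
Qed.

Lemma dist_any m m' : (m < n)%N -> (m' < n)%N ->
  dist (Xn m) (Xn m') <= n%:R + D.
Proof.
move=> mn mn'; apply: le_trans (dist_le _ _ _) _.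
have [/andP [y1 y2] o1 e1] := xy_bnd _ mn; have [/andP [y3 y4] o2 e2] := xy_bnd _ mn'.
have hy : `|(Xn m).2 - (Xn m').2| <= n%:R by rewrite ler_norml; apply/andP; split; lra.
have hw := ltW w0.
have hx : 0 <= (Xn m).1 <= D.
  case om: (odd m); last by rewrite e1 ?om // lexx ltW.
  have /andP [h1 h2] := o1 om; apply/andP; split => //; exact: le_trans hw h1.
have hx' : 0 <= (Xn m').1 <= D.
  case om: (odd m'); last by rewrite e2 ?om // lexx ltW.
  have /andP [h1 h2] := o2 om; apply/andP; split => //; exact: le_trans hw h1.
move: hx hx' => /andP [? ?] /andP [? ?].
have : `|(Xn m).1 - (Xn m').1| <= D by rewrite ler_norml; apply/andP; split; lra.
lra.
Qed.

Lemma par_succ i : (i < n)%N -> odd i != odd (i.+1 %% n).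
Proof.
move=> hi; case: (ltngtP i.+1 n) => h.
- by rewrite modn_small //=; case: (odd i).
- lia.
- have ei : i = n.-1 by lia.
  by rewrite h modnn /= ei odd_last.
Qed.

Lemma LT : n%:R * ((1 - d) * D) <= tour_length (fun m : 'I_n => Xn m) 1%g.
Proof.
rewrite /tour_length mulr_natl.
rewrite (_ : (1 - d) * D *+ n = \sum_(i < n) ((1 - d) * D)); last first.
  by rewrite sumr_const card_ord.
apply: ler_sum => i _; rewrite !perm1; apply: dist_diff => //.
exact: par_succ.
Qed.

Lemma half_n : n = (2 * n./2)%N.
Proof. have := odd_double_half n; rewrite (negbTE ne) -muln2 /=; lia. Qed.

Definition sf (i : nat) : nat := if (i < n./2)%N then (2 * i)%N else (2 * (i - n./2)).+1.

Lemma sf_lt i : (i < n)%N -> (sf i < n)%N.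
Proof. have := half_n; rewrite /sf; case: ifP => /=; lia. Qed.

Lemma sf_odd i : odd (sf i) = ~~ (i < n./2)%N.
Proof. by rewrite /sf; case: ifP => _ /=; rewrite oddM /= ?negbK. Qed.

Lemma sf_inj i j : (i < n)%N -> (j < n)%N -> sf i = sf j -> i = j.
Proof. have := half_n; rewrite /sf; case: ifP; case: ifP => /=; lia. Qed.

Definition fS (i : 'I_n) : 'I_n := Ordinal (sf_lt _ (ltn_ord i)).

Lemma fS_inj : injective fS.
Proof.
move=> i j /(congr1 val) /= e; apply: val_inj; exact: sf_inj _ _ (ltn_ord i) (ltn_ord j) e.
Qed.

Definition S : 'S_n := perm fS_inj.

Lemma sum_ind a : (a < n)%N -> \sum_(i < n) (if val i == a then D else 0) = D.
Proof.
move=> ha; rewrite (bigD1 (Ordinal ha)) //= eqxx big1 ?addr0 // => j hj.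
case: eqP => // e; exfalso; move/negP: hj; apply; apply/eqP; exact: val_inj.
Qed.

Lemma LS : tour_length (fun m : 'I_n => Xn m) S <= n%:R * (n%:R + d * D) + D + D.
Proof.
rewrite /tour_length.
apply: le_trans (_ : _ <= \sum_(i < n) ((n%:R + d * D) +
   ((if val i == (n./2).-1 then D else 0) + (if val i == n.-1 then D else 0)))) _.
  apply: ler_sum => i _; rewrite !permE /=.
  have hi := ltn_ord i.
  have h1 := sf_lt _ hi; have h2 := sf_lt _ (ltn_pmod i.+1 (ltn_trans (ltn0Sn _) n4)).
  have hD := ltW D0; have hdD : 0 <= d * D by apply: mulr_ge0; exact: ltW.
  have hh := half_n.
  case: (eqVneq (val i) (n./2).-1) => e1.
    apply: le_trans (dist_any _ _ h1 h2) _.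
    case: ifP => _; lra.
  case: (eqVneq (val i) n.-1) => e2.
    apply: le_trans (dist_any _ _ h1 h2) _.
    lra.
  rewrite !addr0; apply: dist_same => //.
  move/eqP: e1 => e1; move/eqP: e2 => e2.
  change (nat_of_ord i <> (n./2).-1) in e1; change (nat_of_ord i <> n.-1) in e2.
  rewrite !sf_odd modn_small; last by lia.
  case: (ltnP i n./2); case: (ltnP i.+1 n./2) => //; lia.
rewrite big_split /= sumr_const card_ord -mulr_natl big_split /=.
rewrite sum_ind; last by have := half_n; lia.
rewrite sum_ind; last by lia.
by rewrite !mulr1 mulr_natl addrA.
Qed.

Lemma result : injective (fun m : 'I_n => Xn m) /\
  exists T : 'S_n, noncrossing (fun m : 'I_n => Xn m) T /\
  exists Topt : 'S_n, optimal_tour (fun m : 'I_n => Xn m) Topt /\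
    n%:R * ((1 - d) * D) <= tour_length (fun m : 'I_n => Xn m) T /\
    tour_length (fun m : 'I_n => Xn m) Topt <= n%:R * (n%:R + d * D) + D + D.
Proof.
split; first exact: Xinj.
exists 1%g; split; first exact: noncross.
have [s hs] := @ex_min R _ (tour_length (fun m : 'I_n => Xn m)) 1%g.
exists s; split; first exact: hs.
split; first exact: LT.
exact: le_trans (hs S) LS.
Qed.

End Constr.


Lemma tl_ge0 (R : realType) n (X : 'I_n -> pt R) s : 0 <= tour_length X s.
Proof. by apply: sumr_ge0 => i _; apply: sqrtr_ge0. Qed.

Lemma edge2 (s : 'S_2) (i : 'I_2) : edge s i = setT.
Proof.
apply/setP => x; rewrite !inE.
have : s i != s (ordS i) by rewrite (inj_eq perm_inj); case: i => [[|[|]]].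
case: (s i) => [[|[|]]] //; case: (s (ordS i)) => [[|[|]]] //;
  case: x => [[|[|]]] //.
Qed.

Lemma small (R : realType) n (hn : ~~ odd n) (h : (n < 4)%N) (eps : R) :
  0 < eps -> eps < 1 ->
      exists X : 'I_n -> pt R, injective X /\
        exists T : 'S_n, noncrossing X T /\
        exists Topt : 'S_n, optimal_tour X Topt /\
          tour_length X T >= (n%:R / 2) * (1 - eps) * tour_length X Topt.
Proof.
move=> e0 e1.
have n2 : (n <= 2)%N by move: hn h; case: n => [|[|[|[|]]]].
exists (fun m : 'I_n => ((val m)%:R, 0)); split.
  move=> a b [/eqP]; rewrite eqr_nat => /eqP e; exact: val_inj.
exists 1%g; split.
  clear h; move: hn n2; case: n => [|[|[|]]] // _ _.
    by move=> [].
  by move=> i j; rewrite !edge2 eqxx.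
have [s hs] := @ex_min R _ (tour_length (fun m : 'I_n => ((val m)%:R, 0) : pt R)) 1%g.
exists s; split => //.
apply: le_trans (hs 1%g).
have hc : n%:R / 2 * (1 - eps) <= 1.
  have : n%:R <= 2 :> R by rewrite (ler_nat R n 2).
  move=> hn2; have h1 : n%:R / 2 <= 1 :> R by rewrite ler_pdivrMr // mul1r.
  have hz : 0 <= n%:R / 2 :> R by apply: divr_ge0.
  nra.
have := @tl_ge0 R n (fun m : 'I_n => ((val m)%:R, 0) : pt R) s.
move=> h0; rewrite -[X in _ <= X]mul1r ler_wpM2r //.
Qed.

Theorem theorem1 (R : realType) (n : nat) (hn : ~~ odd n) :
  exists2 eps0 : R, 0 < eps0 &
    forall eps : R, 0 < eps -> eps < eps0 ->
      exists X : 'I_n -> pt R, injective X /\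
        exists T : 'S_n, noncrossing X T /\
        exists Topt : 'S_n, optimal_tour X Topt /\
          tour_length X T >= (n%:R / 2) * (1 - eps) * tour_length X Topt.
Proof.
exists 1 => // eps e0 e1.
case: (ltnP n 4) => hn4; first exact: small.
set N : R := n%:R.
have N4 : 4 <= N by rewrite /N (ler_nat R 4 n).
have N0 : 0 < N by apply: lt_le_trans N4.
pose D := N ^+ 2 / eps.
pose d := eps / (2 * N).
have D0 : 0 < D by apply: divr_gt0 => //; apply: exprn_gt0.
have d0 : 0 < d by apply: divr_gt0 => //; apply: mulr_gt0.
have d1 : d < 1.
  rewrite /d ltr_pdivrMr ?mulr_gt0 // mul1r; nra.
have [Xi [T [hT [Topt [hopt [h1 h2]]]]]] := @result R n D d hn4 hn D0 d0 d1.
exists (fun m : 'I_n => Xn R n D d m); split => //.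
exists T; split => //.
exists Topt; split => //.
have c0 : 0 <= N / 2 * (1 - eps).
  apply: mulr_ge0; first by apply: divr_ge0; apply: ltW.
  by rewrite subr_ge0 ltW.
apply: le_trans (ler_wpM2l c0 h2) _.
apply: le_trans _ h1.
have eD : eps * D = N ^+ 2 by rewrite /D mulrC divfK // gt_eqF.
have edD : d * D = N / 2.
  rewrite /d /D; field; apply/andP; split; apply: lt0r_neq0 => //.
rewrite edD mulrBl mul1r edD.
have eND : N * (eps * D) = N * N * N by rewrite eD expr2 mulrA.
have h3 : 0 <= N * N * N * eps by apply: mulr_ge0; [rewrite !mulr_ge0 // ltW|apply: ltW].
have h4 : N * N * 2 <= N * N * N by rewrite ler_pM2l ?mulr_gt0 //; lra.
rewrite -/N.
nra.
Qed.
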